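(* Let $G$ be the fundamental solution of the wave or heat equation and $T>0$. For any $\alpha\in(-1,1)$ and any $h\in\mathbb{R}$, $$\int_0^T\int_{\mathbb{R}}(1-\cos(\xi h))|\mathcal{F}G_t(\xi)|^2|\xi|^{\alpha}d\xi\,dt\le\begin{cases}CT|h|^{1-\alpha}&\text{wave equation},\\ C|h|^{1-\alpha}&\text{heat equation},\end{cases}$$ where $C=\int_{\mathbb{R}}(1-\cos\eta)|\eta|^{\alpha-2}d\eta$.
   Context: Wave: $\mathcal{F}G_t(\xi)=\sin(t|\xi|)/|\xi|$. Heat: $\mathcal{F}G_t(\xi)=e^{-t|\xi|^2/2}$. *)

(* Defs.v *)
From mathcomp Require Import all_boot all_order all_algebra.
From mathcomp Require Import all_classical all_reals all_analysis.
Set Implicit Arguments. Unset Strict Implicit. Unset Printing Implicit Defensive.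
Import Order.TTheory GRing.Theory Num.Theory.
Local Open Scope ring_scope.

(* Fourier transform (in space, dimension 1) of the fundamental solution G_t. *)
Inductive equation := Wave | Heat.

Definition FG {R : realType} (e : equation) (t xi : R) : R :=
  match e with
  | Wave => sin (t * `|xi|) / `|xi|
  | Heat => expR (- (t * `|xi| ^+ 2) / 2)
  end.

(* Main.v *)
Require Import Defs.
From HB Require Import structures.
From mathcomp Require Import all_boot all_order all_algebra.
From mathcomp Require Import all_classical all_reals all_analysis measurable_realfun.
From mathcomp Require Import ring lra.
Import Order.TTheory GRing.Theory Num.Theory.
Local Open Scope classical_set_scope.
Local Open Scope ring_scope.

Section Scale.
Context (R : realType) (c : R) (c0 : 0 < c).
Let phi : R -> measurableTypeR R := fun x => c * x.
Let mphi : measurable_fun setT phi.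
Proof. by apply: measurable_funM. Qed.
Let nuM : {measure set (measurableTypeR R) -> \bar R} :=
  @measure_function_pushforward__canonical__measure_function_Measure _ _ _ _ _ (@lebesgue_measure R) phi mphi.
Let nu2 := mscale (NngNum (ltW c0)) nuM.

Let leb_nu2 (A : set R) : measurable A -> lebesgue_measure A = nu2 A.
Proof.
move=> mA.
have H : forall X : set R, ocitv X -> lebesgue_measure X = nu2 X.
  move=> _ [[a b] _ <-] /=.
rewrite /nu2 /mscale /= /nuM /= /pushforward.
have -> : phi @^-1` `]a, b]%classic = `]a / c, b / c]%classic.
  apply/seteqP; split => x /=; rewrite !in_itv /= /phi.
    by rewrite ltr_pdivrMr // ler_pdivlMr // ![x * c]mulrC.
  by rewrite ltr_pdivrMr // ler_pdivlMr // ![x * c]mulrC.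
rewrite !lebesgue_measure_itv /= !lte_fin ltr_pM2r ?invr_gt0 //.
case: ifP => _; last by rewrite mule0.
rewrite -EFinD -EFinM; congr EFin; rewrite -mulrBl mulrC mulfVK ?gt_eqF //.

by apply/lebesgue_measure_unique.
Qed.

Lemma integral_scale (g : R -> \bar R) : measurable_fun setT g ->
  (forall x, 0 <= g x)%E ->
  (\int[@lebesgue_measure R]_(x in [set: R]) (g (c * x)%R * c%:E)%E =
   \int[@lebesgue_measure R]_(x in [set: R]) g x)%E.
Proof.
move=> mg g0.
have -> : (\int[@lebesgue_measure R]_(x in [set: R]) g x =
  \int[nu2]_(x in [set: R]) g x)%E.
  by apply: eq_measure_integral => //= A mA _; exact: leb_nu2.
rewrite ge0_integral_mscale //= ge0_integral_pushforward //.
rewrite preimage_setT.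
rewrite -ge0_integralZl_EFin //; last by rewrite ltW.
- by apply: eq_integral => x _; rewrite muleC.
- by move=> x _; apply: g0.
by apply: measurableT_comp.
Qed.
End Scale.

Section Kern.
Context (R : realType) (alpha : R).
Notation mu := (@lebesgue_measure R).

Lemma mcos1 : measurable_fun setT (fun x : R => 1 - cos x).
Proof.
apply: measurable_funB => //.
apply: continuous_measurable_fun; exact: continuous_cos.
Qed.

Lemma mpowabs (p : R) : measurable_fun setT (fun x : R => powR `|x| p).
Proof. by apply: (@measurableT_comp _ _ _ _ _ _ (@powR R ^~ p)); [exact: measurable_powR|]. Qed.

Definition kern (x : R) : R := (1 - cos x) * powR `|x| (alpha - 2).

Lemma mkern : measurable_fun setT kern.
Proof. exact: measurable_funM mcos1 (mpowabs _). Qed.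

Lemma kern_ge0 x : 0 <= kern x.
Proof. by rewrite /kern mulr_ge0 ?powR_ge0 // subr_ge0 cos_le1. Qed.

Lemma Kh_eq (h : R) : h != 0 ->
  (\int[mu]_(xi in [set: R]) ((1 - cos (xi * h)) * powR `|xi| (alpha - 2))%:E =
  (powR `|h| (1 - alpha))%:E *
  \int[mu]_(eta in [set: R]) ((1 - cos eta) * powR `|eta| (alpha - 2))%:E)%E.
Proof.
move=> h0.
have c0 : 0 < `|h| by rewrite normr_gt0.
rewrite -(@integral_scale _ _ c0 (fun x => (kern x)%:E)); last 2 first.
- by apply/measurable_EFinP; exact: mkern.
- by move=> x; rewrite lee_fin kern_ge0.
rewrite -ge0_integralZl_EFin //; last first.
- apply/measurable_EFinP; apply: measurable_funM => //.
  apply: measurableT_comp; [exact: mkern|by []].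
- by move=> x _; rewrite -EFinM lee_fin mulr_ge0 ?kern_ge0 // ltW.
apply: eq_integral => x _; rewrite -EFinM; congr EFin.
rewrite /kern normrM normr_id powRM //.
have -> : cos (`|h| * x) = cos (x * h).
  have [hp|hn] := leP 0 h.
    by rewrite ger0_norm // mulrC.
  by rewrite ltr0_norm // mulNr cosN mulrC.
have hn0 : `|h| != 0 by rewrite gt_eqF.
have e1 : `|h| `^ (alpha - 2) * `|h| = `|h| `^ (alpha - 1).
  rewrite -{2}(powRr1 (ltW c0)) -powRD; last by rewrite hn0 implybT.
  by congr (_ `^ _); lra.
have e2 : `|h| `^ (1 - alpha) * `|h| `^ (alpha - 1) = 1.
  rewrite -powRD; last by rewrite hn0 implybT.
  by rewrite (_ : 1 - alpha + (alpha - 1) = 0) ?powRr0 //; lra.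
transitivity ((`|h| `^ (1 - alpha) * (`|h| `^ (alpha - 2) * `|h|)) *
   ((1 - cos (x * h)) * `|x| `^ (alpha - 2))); last by ring.
by rewrite e1 e2 mul1r.
Qed.
End Kern.

Section Wave.
Context (R : realType) (alpha h T : R) (T0 : 0 < T).
Notation mu := (@lebesgue_measure R).

Lemma msnd (f : R -> R) : measurable_fun setT f ->
  measurable_fun setT (fun p : R * R => f p.2).
Proof. by move=> mf; apply: measurableT_comp => //; exact: measurable_snd. Qed.

Lemma mfst (f : R -> R) : measurable_fun setT f ->
  measurable_fun setT (fun p : R * R => f p.1).
Proof. by move=> mf; apply: measurableT_comp => //; exact: measurable_fst. Qed.

Definition Fw (t xi : R) : R :=
  (1 - cos (xi * h)) * sin (t * `|xi|) ^+ 2 * powR `|xi| (alpha - 2).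

Lemma Fw_ge0 t xi : 0 <= Fw t xi.
Proof.
rewrite /Fw; apply: mulr_ge0; [apply: mulr_ge0|exact: powR_ge0]; [by rewrite subr_ge0 cos_le1|exact: sqr_ge0].
Qed.

Lemma mcosh : measurable_fun setT (fun x : R => 1 - cos (x * h)).
Proof.
apply: measurable_funB => //.
apply: (measurableT_comp (f := cos) (g := fun x : R => x * h)).
  by apply: continuous_measurable_fun; exact: continuous_cos.
exact: measurable_funM.
Qed.

Lemma mFw : measurable_fun setT (fun p : R * R => Fw p.1 p.2).
Proof.
apply: measurable_funM; last first.
  apply: (measurableT_comp (f := fun x : R => powR `|x| (alpha - 2)) (g := snd)); [exact: (@mpowabs R (alpha - 2))|exact: measurable_snd].
apply: measurable_funM.
  apply: (measurableT_comp (f := fun x : R => 1 - cos (x * h)) (g := snd)); [exact: mcosh|exact: measurable_snd].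
apply: measurable_funX.
apply: (measurableT_comp (f := sin) (g := fun p : R * R => p.1 * `|p.2|)).
  by apply: continuous_measurable_fun; exact: continuous_sin.
apply: measurable_funM; first exact: measurable_fst.
apply: (measurableT_comp (f := @Num.norm R R) (g := snd)); [exact: normr_measurable|exact: measurable_snd].
Qed.

Lemma powR_m2 (x : R) : x != 0 -> powR `|x| (alpha - 2) = powR `|x| alpha / `|x| ^+ 2.
Proof.
move=> x0.
rewrite powRD; last by rewrite normr_eq0 x0 implybT.
by rewrite powRN powR_mulrn.
Qed.

Lemma wave_pt t xi :
  (1 - cos (xi * h)) * `|FG Wave t xi| ^+ 2 * powR `|xi| alpha = Fw t xi.
Proof.
rewrite /FG /Fw.
have [->|xi0] := eqVneq xi 0.
  by rewrite normr0 mulr0 sin0 !mul0r normr0 expr0n /= !mulr0 !mul0r.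
rewrite powR_m2 // normrM normfV normr_id real_normK ?num_real //.
rewrite exprMn exprVn (real_normK (num_real _)).
by rewrite real_normK ?num_real //; ring.
Qed.

Lemma Fw_le t xi : Fw t xi <= (1 - cos (xi * h)) * powR `|xi| (alpha - 2).
Proof.
rewrite /Fw -mulrA ler_wpM2l ?subr_ge0 ?cos_le1 //.
rewrite ler_piMl ?powR_ge0 // sin2cos2 lerBlDr lerDl sqr_ge0 //.
Qed.


Lemma wave_I :
  (\int[mu]_(t in `[0%R, T]%classic) \int[mu]_(xi in [set: R])
        ((1 - cos (xi * h)) * `|FG Wave t xi| ^+ 2 * powR `|xi| alpha)%:E <=
   (\int[mu]_(xi in [set: R]) ((1 - cos (xi * h)) * powR `|xi| (alpha - 2))%:E) * T%:E)%E.
Proof.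
under eq_integral => t _ do under eq_integral => xi _ do rewrite wave_pt.
set Kh := (\int[mu]_(xi in [set: R]) _)%E.
have Kh0 : (0 <= Kh)%E.
  apply: integral_ge0 => x _; rewrite lee_fin.
  by rewrite mulr_ge0 ?powR_ge0 // subr_ge0 cos_le1.
apply: (@le_trans _ _ (\int[mu]_(t in `[0%R, T]%classic) cst Kh t)%E).
  apply: ge0_le_integral => //.
  - by move=> t _; apply: integral_ge0 => x _; rewrite lee_fin Fw_ge0.
  - apply: measurable_funS (subsetT _) _ => //.
    apply: (@measurable_fun_fubini_tonelli_F _ _ (measurableTypeR R) (measurableTypeR R) R mu (fun p => (Fw p.1 p.2)%:E)).
      by apply/measurable_EFinP; exact: mFw.
    by move=> p; rewrite lee_fin Fw_ge0.
  - move=> t _; apply: ge0_le_integral => //.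
    + by move=> x _; rewrite lee_fin Fw_ge0.
    + apply/measurable_EFinP.
      apply: (measurableT_comp (f := fun p : R * R => Fw p.1 p.2) (g := fun x => (t, x))); first exact: mFw.
      exact: pair1_measurable.
    + apply/measurable_EFinP; apply: measurable_funM; first exact: mcosh.
      exact: mpowabs.
    + by move=> x _; rewrite lee_fin Fw_le.
by rewrite integral_cst //= lebesgue_measure_itv /= lte_fin T0 oppr0 adde0.
Qed.
End Wave.

Section Heat.
Context (R : realType) (alpha h T : R) (T0 : 0 < T).
Notation mu := (@lebesgue_measure R).

Definition Fh (t xi : R) : R :=
  (1 - cos (xi * h)) * expR (- (t * xi ^+ 2)) * powR `|xi| alpha.

Lemma Fh_ge0 t xi : 0 <= Fh t xi.
Proof.
rewrite /Fh; apply: mulr_ge0; [apply: mulr_ge0|exact: powR_ge0];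
  [by rewrite subr_ge0 cos_le1|exact: expR_ge0].
Qed.

Lemma heat_pt t xi :
  (1 - cos (xi * h)) * `|FG Heat t xi| ^+ 2 * powR `|xi| alpha = Fh t xi.
Proof.
rewrite /FG /Fh ger0_norm ?expR_ge0 // -expRM_natl real_normK ?num_real //.
by congr (_ * expR _ * _); rewrite mulrC divfK // pnatr_eq0.
Qed.

Definition D0 : set R := `[0%R, T]%classic.

Definition fh (p : R * R) : \bar R := ((\1_D0 p.1 : R) * Fh p.1 p.2)%:E.

Lemma fh_ge0 p : (0 <= fh p)%E.
Proof. by rewrite lee_fin mulr_ge0 ?Fh_ge0. Qed.

Lemma mfh : measurable_fun setT fh.
Proof.
apply/measurable_EFinP.
apply: measurable_funM.
  apply: (measurableT_comp (f := (\1_D0 : R -> R)) (g := fst)); last exact: measurable_fst.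
  apply: measurable_indic; exact: measurable_itv.
apply: measurable_funM; last first.
  apply: (measurableT_comp (f := fun x : R => powR `|x| alpha) (g := snd)); [exact: (@mpowabs R alpha)|exact: measurable_snd].
apply: measurable_funM.
  apply: (measurableT_comp (f := fun x : R => 1 - cos (x * h)) (g := snd)); [exact: mcosh|exact: measurable_snd].
apply: (measurableT_comp (f := expR) (g := fun p : R * R => - (p.1 * p.2 ^+ 2))).
  exact: measurable_expR.
apply: measurable_funN.
apply: measurable_funM; first exact: measurable_fst.
apply: measurable_funX; exact: measurable_snd.
Qed.


Lemma heat_inner xi :
  (\int[mu]_t fh (t, xi) <= ((1 - cos (xi * h)) * powR `|xi| (alpha - 2))%:E)%E.
Proof.
have [->|xi0] := eqVneq xi 0.
  rewrite integral0_eq; first by rewrite mul0r cos0 subrr mul0r.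
  by move=> t _; rewrite /fh /Fh mul0r cos0 subrr !mul0r mulr0.
set a := xi ^+ 2.
have a0 : 0 < a by rewrite /a lt_def sqrf_eq0 xi0 sqr_ge0.
set G := (1 - cos (xi * h)) * powR `|xi| alpha.
have G0 : 0 <= G by rewrite /G mulr_ge0 ?powR_ge0 // subr_ge0 cos_le1.
apply: (@le_trans _ _ (\int[mu]_t ((G / a)%:E * (exponential_pdf a t)%:E))%E).
  apply: ge0_le_integral => //.
  - by move=> t _; exact: fh_ge0.
  - apply: (measurableT_comp (f := fh) (g := fun t => (t, xi))); first exact: mfh.
    exact: pair2_measurable.
  - apply/measurable_EFinP; apply: measurable_funM => //.
    exact: measurable_exponential_pdf.
  - move=> t _; rewrite /fh -EFinM lee_fin.
    rewrite indicE /=; have [tD|tD] := boolP (t \in D0).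
      have t0 : 0 <= t by move: tD; rewrite inE /D0 /= in_itv /= => /andP[].
      rewrite exponential_pdfE // mul1r /Fh.
      rewrite le_eqVlt; apply/orP; left; apply/eqP; rewrite /G /a [t * _]mulrC mulNr; field.
      by [].
    by rewrite /= mul0r mulr_ge0 ?divr_ge0 ?exponential_pdf_ge0 // ltW.
rewrite ge0_integralZl_EFin //; last 3 first.
- by move=> t _; rewrite lee_fin exponential_pdf_ge0 // ltW.
- by apply/measurable_EFinP; exact: measurable_exponential_pdf.
- by rewrite divr_ge0 // ltW.
rewrite integral_exponential_pdf // mule1 lee_fin /G /a powR_m2 //.
by rewrite real_normK ?num_real // mulrA.
Qed.


Lemma heat_I :
  (\int[mu]_(t in `[0%R, T]%classic) \int[mu]_(xi in [set: R])
        ((1 - cos (xi * h)) * `|FG Heat t xi| ^+ 2 * powR `|xi| alpha)%:E <=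
   \int[mu]_(xi in [set: R]) ((1 - cos (xi * h)) * powR `|xi| (alpha - 2))%:E)%E.
Proof.
under eq_integral => t _ do under eq_integral => xi _ do rewrite heat_pt.
rewrite integral_mkcond.
have -> : (\int[mu]_t ((fun t => \int[mu]_(xi in [set: R]) (Fh t xi)%:E) \_ `[0%R, T]%classic) t
   = \int[mu]_t \int[mu]_xi fh (t, xi))%E.
  apply: eq_integral => t _; rewrite patchE.
  case: ifPn => tD.
    by apply: eq_integral => xi _; rewrite /fh indicE /D0 tD mul1r.
  rewrite integral0_eq // => xi _.
  by rewrite /fh indicE /D0 (negbTE tD) mul0r.
rewrite (@fubini_tonelli _ _ (measurableTypeR R) (measurableTypeR R) R mu mu fh mfh fh_ge0).
apply: ge0_le_integral => //.
- by move=> xi _; apply: integral_ge0 => t _; exact: fh_ge0.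
- exact: (@measurable_fun_fubini_tonelli_G _ _ (measurableTypeR R) (measurableTypeR R) R mu fh mfh fh_ge0).
- apply/measurable_EFinP; apply: measurable_funM; first exact: mcosh.
  exact: mpowabs.
- by move=> xi _; exact: heat_inner.
Qed.

End Heat.
Theorem lemma3p4 (R : realType) (T alpha h : R) :
  0 < T -> -1 < alpha < 1 ->
  let mu := (@lebesgue_measure R) in
  let C : \bar R :=
    (\int[mu]_(eta in [set: R]) ((1 - cos eta) * powR `|eta| (alpha - 2))%:E)%E in
  let I (e : equation) : \bar R :=
    (\int[mu]_(t in `[0%R, T]%classic) \int[mu]_(xi in [set: R])
        ((1 - cos (xi * h)) * `|FG e t xi| ^+ 2 * powR `|xi| alpha)%:E)%E in
  (I Wave <= C * (T * powR `|h| (1 - alpha))%:E)%E /\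
  (I Heat <= C * (powR `|h| (1 - alpha))%:E)%E.
Proof.
move=> T0 _ mu C I.
have C0 : (0 <= C)%E.
  apply: integral_ge0 => x _; rewrite lee_fin.
  by rewrite mulr_ge0 ?powR_ge0 // subr_ge0 cos_le1.
set Kh := (\int[mu]_(xi in [set: R]) ((1 - cos (xi * h)) * powR `|xi| (alpha - 2))%:E)%E.
have [h0|h0] := eqVneq h 0.
  have K0 : Kh = 0%E.
    rewrite /Kh integral0_eq // => x _.
    by rewrite h0 mulr0 cos0 subrr mul0r.
  split.
    apply: le_trans (@wave_I R alpha h T T0) _.
    rewrite -/Kh K0 mul0e mule_ge0 // lee_fin mulr_ge0 ?powR_ge0 //.
    exact: ltW.
  apply: le_trans (@heat_I R alpha h T) _.
  by rewrite -/Kh K0 mule_ge0 // lee_fin powR_ge0.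
have KE : Kh = ((powR `|h| (1 - alpha))%:E * C)%E by exact: (@Kh_eq R alpha h h0).
split.
  apply: le_trans (@wave_I R alpha h T T0) _.
  rewrite -/Kh KE [X in (X * _)%E]muleC -muleA -EFinM [_ * T]mulrC.
  by [].
apply: le_trans (@heat_I R alpha h T) _.
by rewrite -/Kh KE muleC.
Qed.
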